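(* Consider the perturbed asynchronous consensus scheme: given $x_i^0\in\mathbb R$, $v_i^t=0$ for $t=-D,\dots,0$, and scalars $\{\delta^k\}$, at iteration $k$ $v_{i^k}^{k+1}=x_{i^k}^k+\delta^k$, $x_{i^k}^{k+1}=w_{i^ki^k}v_{i^k}^{k+1}+\sum_{j\in\mathcal N_{i^k}^{\rm in}}w_{i^kj}v_j^{k-d_j^k}$, and $v_j^{k+1}=v_j^k$, $x_j^{k+1}=x_j^k$ for $j\ne i^k$. Let $\mathbf h^k=[\mathbf x^{k\top},\mathbf v^{k\top},\mathbf v^{k-1\top},\dots,\mathbf v^{k-D\top}]^\top\in\mathbb R^{(D+2)I}$, so that $\mathbf h^{k+1}=\widehat{\mathbf W}^k(\mathbf h^k+\delta^k\mathbf e_{i^k})$. Let $C_2>0$, $\rho\in(0,1)$ and stochastic vectors $\{\boldsymbol\psi^k\}$ satisfy $\|\widehat{\mathbf W}^{k:t}-\mathbf 1\boldsymbol\psi^{t\top}\|\le C_2\rho^{k-t}$ for all $k\ge t\ge0$. Define $\bar h^0=\boldsymbol\psi^{0\top}\mathbf h^0$ and $\bar h^{k+1}=\boldsymbol\psi^{0\top}\mathbf h^0+\sum_{l=0}^k\psi_{i^l}^l\delta^l$. Then for all $k\in\mathbb N_0$, $$\|\mathbf h^{k+1}-\mathbf 1\bar h^{k+1}\|\le C_2\rho^k\|\mathbf h^0-\mathbf 1\bar h^0\|+C_2\sum_{l=0}^k\rho^{k-l}|\delta^l|.$$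
   Context: $\mathcal G=(\mathcal V,\mathcal E)$, $\mathcal V=\{1,\dots,I\}$, digraph without self-loops, $\mathcal N_i^{\rm in}=\{j:(j,i)\in\mathcal E\}$; $\mathbf W=(w_{ij})$ row-stochastic with $w_{ij}=0$ unless $i=j$ or $(j,i)\in\mathcal E$. $(i^k,\mathbf d^k)$ with $i^k\in\mathcal V$, $0\le d_j^k\le D$. $\mathbf e_i$ is the $i$-th canonical vector of $\mathbb R^{(D+2)I}$. Augmented matrix $\widehat{\mathbf W}^k$: entry $(r,m)$ equals $w_{i^ki^k}$ if $r=m=i^k$; $w_{i^kj}$ if $r=i^k$ and $m=j+(d_j^k+1)I$, $j\in\mathcal N^{\rm in}_{i^k}$; $1$ if $r=m\in\{1,\dots,2I\}\setminus\{i^k,i^k+I\}$; $1$ if $r\in\{2I+1,\dots,(D+2)I\}\cup\{i^k+I\}$ and $m=r-I$; $0$ otherwise. $\widehat{\mathbf W}^{k:t}=\widehat{\mathbf W}^k\cdots\widehat{\mathbf W}^t$ ($=\widehat{\mathbf W}^t$ if $k=t$). $\|\cdot\|$ is the Euclidean/spectral norm. *)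

(* Defs.v *)
From HB Require Import structures.
From mathcomp Require Import all_boot all_order all_algebra.
Set Implicit Arguments. Unset Strict Implicit. Unset Printing Implicit Defensive.
Import Order.TTheory GRing.Theory Num.Theory.
Local Open Scope ring_scope.

(* Indexing convention (0-based): the augmented vector h in R^((D+2)I) has
   entry number  j + b*I  (b < D+2, j < I) equal to
     x_j^k            if b = 0,
     v_j^(k-(b-1))    if b >= 1.                                           *)

(* Augmented matrix \widehat W^k, given the current active node i = i^k and
   the delays d = d^k (d j = d_j^k).  Entry (r,m) as in the paper, shifted to
   0-based indices. *)
Definition What (R : pzRingType) (I D : nat) (E : rel 'I_I) (W : 'M[R]_I)
    (i : 'I_I) (d : 'I_I -> nat) : 'M[R]_(D.+2 * I) :=
  \matrix_(r, m)
    (if (r : nat) == (i : nat) then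
       (if (m : nat) == (i : nat) then W i i
        else \sum_(j : 'I_I | E j i && ((m : nat) == (j + (d j).+1 * I)%N)) W i j)
     else if ((r < 2 * I)%N && ((r : nat) != (i + I)%N)) then ((m : nat) == r)%:R
     else (((m + I)%N) == r)%:R).

(* \widehat W^{k:t} = \widehat W^k ... \widehat W^t, as Wprod Wh t (k - t). *)
Fixpoint Wprod (R : pzRingType) (n : nat) (Wh : nat -> 'M[R]_n) (t s : nat) : 'M[R]_n :=
  match s with
  | 0 => Wh t
  | s'.+1 => Wh (t + s'.+1)%N *m Wprod Wh t s'
  end.

(* The perturbed asynchronous consensus scheme.  xv k = (x^k, s |-> v^s);
   v^s = 0 for s <= 0 (negative times are represented by truncated
   subtraction landing on time 0, where v is 0). *)
Fixpoint xv (R : pzRingType) (I : nat) (E : rel 'I_I) (W : 'M[R]_I)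
    (ik : nat -> 'I_I) (d : nat -> 'I_I -> nat) (x0 : 'I_I -> R)
    (delta : nat -> R) (k : nat) : ('I_I -> R) * (nat -> 'I_I -> R) :=
  match k with
  | 0 => (x0, fun _ _ => 0)
  | k'.+1 =>
      let: (x, v) := xv E W ik d x0 delta k' in
      let i := ik k' in
      let vnew := x i + delta k' in
      let xnew := W i i * vnew + \sum_(j : 'I_I | E j i) W i j * v (k' - d k' j)%N j in
      (fun j => if j == i then xnew else x j,
       fun s j => if s == k'.+1 then (if j == i then vnew else v k' j) else v s j)
  end.

Definition hvec (R : pzRingType) (I D : nat) (E : rel 'I_I) (W : 'M[R]_I)
    (ik : nat -> 'I_I) (d : nat -> 'I_I -> nat) (x0 : 'I_I -> R)
    (delta : nat -> R) (k : nat) : 'cV[R]_(D.+2 * I) :=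
  let: (x, v) := xv E W ik d x0 delta k in
  \col_(r < D.+2 * I)
    (let b := (r %/ I)%N in
     match (insub (r %% I)%N : option 'I_I) with
     | Some j => if b == 0%N then x j else v (k - b.-1)%N j
     | None => 0
     end).

Definition ecol (R : pzRingType) (n i : nat) : 'cV[R]_n := \col_(r < n) ((r : nat) == i)%:R.

Definition vnorm (R : rcfType) (n : nat) (v : 'cV[R]_n) : R :=
  Num.sqrt (\sum_(r < n) (v r 0) ^+ 2).

Definition specnorm_le (R : rcfType) (n : nat) (A : 'M[R]_n) (c : R) : Prop :=
  forall x : 'cV[R]_n, vnorm (A *m x) <= c * vnorm x.

Definition stochastic_vec (R : numDomainType) (n : nat) (p : 'cV[R]_n) : Prop :=
  (forall r, 0 <= p r 0) /\ \sum_(r < n) p r 0 = 1.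

Definition row_stochastic (R : numDomainType) (n : nat) (A : 'M[R]_n) : Prop :=
  (forall i j, 0 <= A i j) /\ (forall i, \sum_(j < n) A i j = 1).

(* Main.v *)
Require Import Defs.
From HB Require Import structures.
From mathcomp Require Import all_boot all_order all_algebra.
From mathcomp Require Import ring lra zify.
Import Order.TTheory GRing.Theory Num.Theory.
Local Open Scope ring_scope.

Section Norms.
Variable R : rcfType.
Variable n : nat.

Lemma vnorm_ge0 (v : 'cV[R]_n) : 0 <= vnorm v.
Proof. exact: sqrtr_ge0. Qed.

Lemma sumsq_ge0 (v : 'cV[R]_n) : 0 <= \sum_(r < n) (v r 0) ^+ 2.
Proof. by apply: sumr_ge0 => r _; rewrite sqr_ge0. Qed.

Lemma vnorm_sq (v : 'cV[R]_n) : vnorm v ^+ 2 = \sum_(r < n) (v r 0) ^+ 2.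
Proof. by rewrite /vnorm sqr_sqrtr // sumsq_ge0. Qed.

Lemma vnormZ (a : R) (v : 'cV[R]_n) : vnorm (a *: v) = `|a| * vnorm v.
Proof.
rewrite /vnorm.
under eq_bigr => r _ do rewrite mxE exprMn.
by rewrite -mulr_sumr sqrtrM ?sqr_ge0 // sqrtr_sqr.
Qed.

Lemma CS (u v : 'cV[R]_n) :
  (\sum_(r < n) u r 0 * v r 0) ^+ 2 <=
  (\sum_(r < n) (u r 0) ^+ 2) * (\sum_(r < n) (v r 0) ^+ 2).
Proof.
have H : 0 <= \sum_(i < n) \sum_(j < n) (u i 0 * v j 0 - u j 0 * v i 0) ^+ 2.
  by apply: sumr_ge0 => i _; apply: sumr_ge0 => j _; rewrite sqr_ge0.
have E1 : \sum_(i < n) \sum_(j < n) (u i 0 * v j 0 - u j 0 * v i 0) ^+ 2 =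
   2 * ((\sum_(r < n) (u r 0) ^+ 2) * (\sum_(r < n) (v r 0) ^+ 2))
   - 2 * (\sum_(r < n) u r 0 * v r 0) ^+ 2.
  have -> : \sum_(i < n) \sum_(j < n) (u i 0 * v j 0 - u j 0 * v i 0) ^+ 2 =
     \sum_(i < n) \sum_(j < n) ((u i 0)^+2 * (v j 0)^+2 + (u j 0)^+2 * (v i 0)^+2
         - 2 * ((u i 0 * v i 0) * (u j 0 * v j 0))).
    by apply: eq_bigr => i _; apply: eq_bigr => j _; ring.
  have P : forall f g : 'I_n -> R, \sum_(i < n) \sum_(j < n) f i * g j = (\sum_(i < n) f i) * (\sum_(j < n) g j).
    by move=> f g; rewrite big_distrlr.
  under eq_bigr => i _ do rewrite sumrB big_split /=.
  rewrite sumrB big_split /= !P.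
  idtac.
  have -> : \sum_(i < n) \sum_(j < n) (u j 0 ^+ 2 * v i 0 ^+ 2) = \sum_(i < n) \sum_(j < n) (u i 0 ^+ 2 * v j 0 ^+ 2).
    by rewrite exchange_big.
  rewrite P expr2.
  have -> : \sum_(i < n) \sum_(i0 < n) 2 * (u i 0 * v i 0 * (u i0 0 * v i0 0)) =
     2 * ((\sum_(r < n) u r 0 * v r 0) * \sum_(r < n) u r 0 * v r 0).
    by rewrite -P mulr_sumr; apply: eq_bigr => i _; rewrite mulr_sumr.
  ring.
move: H; rewrite E1 subr_ge0 ler_pM2l //.
Qed.

Lemma vnormD (u v : 'cV[R]_n) : vnorm (u + v) <= vnorm u + vnorm v.
Proof.
rewrite -(ler_pXn2r (n:=2)) //; last 2 first.
- by rewrite nnegrE vnorm_ge0.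
- by rewrite nnegrE addr_ge0 // vnorm_ge0.
rewrite sqrrD !vnorm_sq.
have -> : \sum_(r < n) (u + v) r 0 ^+ 2 = \sum_(r < n) (u r 0) ^+ 2 +
   (\sum_(r < n) u r 0 * v r 0) *+ 2 + \sum_(r < n) (v r 0) ^+ 2.
  rewrite -sumrMnl -!big_split /=; apply: eq_bigr => r _; rewrite !mxE; ring.
rewrite lerD2r lerD2l lerMn2r /=.
apply: (le_trans (ler_norm _)).
rewrite -(ler_pXn2r (n:=2)) ?nnegrE ?normr_ge0 ?mulr_ge0 ?vnorm_ge0 //.
by rewrite real_normK ?num_real // exprMn !vnorm_sq CS.
Qed.

Lemma vnorm_sum (m : nat) (f : 'I_m -> 'cV[R]_n) :
  vnorm (\sum_(l < m) f l) <= \sum_(l < m) vnorm (f l).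
Proof.
elim: m f => [|m IH] f.
  rewrite !big_ord0 /vnorm.
  by rewrite (eq_bigr (fun _ => 0)) ?big1 ?sqrtr0 // => r _; rewrite mxE expr0n.
rewrite !big_ord_recr /=.
apply: (le_trans (vnormD _ _)); rewrite lerD2r; exact: IH.
Qed.

Lemma vnorm_ecol (i : nat) : (i < n)%N -> vnorm (ecol R n i) = 1.
Proof.
move=> hi; rewrite /vnorm (bigD1 (Ordinal hi)) //= big1 ?addr0.
  by rewrite mxE eqxx expr1n sqrtr1.
by move=> r; rewrite -val_eqE /= mxE => /negbTE ->; rewrite expr0n.
Qed.
End Norms.
Section Rows.
Variable R : rcfType.

Lemma delta_sum (n c : nat) (F : nat -> R) : (c < n)%N ->
  \sum_(m < n) ((m : nat) == c)%:R * F m = F c.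
Proof.
move=> hc; rewrite (bigD1 (Ordinal hc)) //= eqxx mul1r big1 ?addr0 //.
by move=> m; rewrite -val_eqE /= => /negbTE ->; rewrite mul0r.
Qed.

Variables (I D : nat) (E : rel 'I_I) (W : 'M[R]_I) (i : 'I_I) (dd : 'I_I -> nat).
Hypothesis hdd : forall j, (dd j <= D)%N.
Hypothesis hE : forall j, ~~ E j j.

Lemma What_row (r : 'I_(D.+2 * I)) (F : nat -> R) :
  \sum_m What D E W i dd r m * F m =
  if (r : nat) == (i : nat) then
    W i i * F i + \sum_(j : 'I_I | E j i) W i j * F (j + (dd j).+1 * I)%N
  else if ((r < 2 * I)%N && ((r : nat) != (i + I)%N)) then F r
  else F (r - I)%N.
Proof.
have hI : (0 < I)%N by case: i => /= j; case: I.
under eq_bigr => m _ do rewrite mxE.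
case: ifP => hri.
  have Hm : forall m : 'I_(D.+2 * I),
     (if (m : nat) == (i : nat) then W i i
      else \sum_(j : 'I_I | E j i && ((m : nat) == (j + (dd j).+1 * I)%N)) W i j) * F m
     = ((m : nat) == i)%:R * (W i i * F m) +
       \sum_(j : 'I_I | E j i) ((m : nat) == (j + (dd j).+1 * I)%N)%:R * (W i j * F m).
    move=> m; case: eqP => hm.
      rewrite mul1r big1 ?addr0 // => j _.
      have -> : ((m : nat) == (j + (dd j).+1 * I)%N) = false.
        apply/eqP; move: (ltn_ord i); lia.
      by rewrite mul0r.
    rewrite mul0r add0r mulr_suml big_mkcondr /=; apply: eq_bigr => j _.
    by case: eqP; rewrite ?mul1r ?mul0r.
  rewrite (eq_bigr _ (fun m _ => Hm m)).
  rewrite big_split /= (delta_sum _ _ (fun m => W i i * F m)); last first.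
    by rewrite (leq_trans (ltn_ord i)) // leq_pmull.
  rewrite exchange_big /=; congr (_ + _); apply: eq_bigr => j _.
  rewrite (delta_sum _ _ (fun m => W i j * F m)) //.
  move: (hdd j) (ltn_ord j); rewrite mulSn; nia.
case: ifP => h2.
  rewrite -(delta_sum _ _ _ (ltn_ord r)); apply: eq_bigr => m _.
  by rewrite eq_sym.
rewrite -(delta_sum (D.+2 * I) (r - I) F); last first.
  move: (ltn_ord r); lia.
have hrI : (I <= r)%N.
  move: h2; case: (ltnP r (2 * I)) => /= h3; last lia.
  by move/negbFE/eqP => ->; exact: leq_addl.
apply: eq_bigr => m _.

congr (_ * _); congr (_%:R).
apply/eqP; case: eqP; lia.
Qed.
End Rows.

Section Step.
Variables (R : rcfType) (I D : nat) (E : rel 'I_I) (W : 'M[R]_I).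
Variables (ik : nat -> 'I_I) (d : nat -> 'I_I -> nat) (x0 : 'I_I -> R) (delta : nat -> R).
Hypothesis hE : forall i, ~~ E i i.
Hypothesis hWst : row_stochastic W.
Hypothesis hWsupp : forall i j, i != j -> ~~ E j i -> W i j = 0.
Hypothesis hd : forall k j, (d k j <= D)%N.

Lemma hI : (0 < I)%N.
Proof. by case: (ik 0) => /= j; case: I. Qed.

Lemma row_i_sum (i : 'I_I) : W i i + \sum_(j : 'I_I | E j i) W i j = 1.
Proof.
rewrite -(hWst.2 i) [RHS](bigD1 i) //=; congr (_ + _).
rewrite [RHS](bigID (fun j => E j i)) /= [X in _ = _ + X]big1 ?addr0.
  apply: eq_bigl => j; case hj: (E j i); rewrite ?andbF ?andbT //.
  by apply/esym/eqP => ji; move: (hE i); rewrite -{1}ji hj.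
by move=> j /andP [hji hn]; apply: hWsupp; rewrite // eq_sym.
Qed.

Lemma What_one (i : 'I_I) (dd : 'I_I -> nat) : (forall j, (dd j <= D)%N) ->
  What D E W i dd *m (const_mx 1 : 'cV[R]_(D.+2 * I)) = const_mx 1.
Proof.
move=> hdd; apply/matrixP => r c; rewrite !mxE.
rewrite (eq_bigr (fun m => What D E W i dd r m * 1)); last by move=> m _; rewrite [const_mx _ _ _]mxE.
move: (@What_row R I D E W i dd hdd r (fun _ => 1)) => /= ->.
case: ifP => _; last by case: ifP.
by rewrite mulr1 -[RHS](row_i_sum i); congr (_ + _); apply: eq_bigr => j _; rewrite mulr1.
Qed.

Definition hent (x : 'I_I -> R) (v : nat -> 'I_I -> R) (k r : nat) : R :=
  match (insub (r %% I)%N : option 'I_I) with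
  | Some j => if (r %/ I)%N == 0%N then x j else v (k - (r %/ I).-1)%N j
  | None => 0
  end.

Lemma hent_dec x v k (j : 'I_I) b :
  hent x v k (j + b * I)%N = if b == 0%N then x j else v (k - b.-1)%N j.
Proof.
rewrite /hent.
have -> : ((j + b * I) %% I = j)%N by rewrite addnC modnMDl modn_small.
have -> : ((j + b * I) %/ I = b)%N by rewrite addnC divnMDl ?hI // divn_small ?addn0.
case: insubP => [j' _ hj'|]; last by rewrite ltn_ord.
by have -> : j' = j by apply: val_inj.
Qed.

Lemma hent_lt x v k (j : 'I_I) : hent x v k j = x j.
Proof. by have := hent_dec x v k j 0; rewrite mul0n addn0. Qed.

Lemma hvecE k : hvec D E W ik d x0 delta k =
  let: (x, v) := xv E W ik d x0 delta k in \col_(r < D.+2 * I) hent x v k r.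
Proof. by []. Qed.


Lemma hstep k : hvec D E W ik d x0 delta k.+1 =
  What D E W (ik k) (d k) *m (hvec D E W ik d x0 delta k + delta k *: ecol R (D.+2 * I) (ik k)).
Proof.
rewrite !hvecE [xv _ _ _ _ _ _ k.+1]/=.
case: (xv E W ik d x0 delta k) => x v.
apply/matrixP => r c; rewrite ord1 !mxE.
rewrite (eq_bigr (fun m => What D E W (ik k) (d k) r m *
   (hent x v k m + delta k * ((m : nat) == ik k)%:R))); last first.
  by move=> m _; rewrite !mxE.
move: (@What_row R I D E W (ik k) (d k) (hd k) r
   (fun m => hent x v k m + delta k * ((m : nat) == ik k)%:R)) => /= ->.
have -> : \sum_(j < I | E j (ik k))
       W (ik k) j *
       (hent x v k (j + (d k j).+1 * I) +
        delta k * ((j + (d k j).+1 * I)%N == ik k)%:R) =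
   \sum_(j0 < I | E j0 (ik k)) W (ik k) j0 * v (k - d k j0)%N j0.
  apply: eq_bigr => j _; rewrite hent_dec /=.
  have -> : ((j + (d k j).+1 * I)%N == ik k) = false.
    apply/eqP; move: (ltn_ord (ik k)); rewrite mulSn; lia.
  by rewrite mulr0 addr0.
have [j [b ->]] : exists (j : 'I_I) b, (r : nat) = (j + b * I)%N.
  by exists (Ordinal (ltn_pmod r hI)), (r %/ I)%N; rewrite /= addnC -divn_eq.
move: (ltn_ord (ik k)) => hiI.
case: b => [|[|b]].
- rewrite mul0n addn0 !hent_lt.
  case: (eqVneq j (ik k)) => [->|hji]; first by rewrite !eqxx mulr1.
  have -> : ((j : nat) == ik k) = false by apply/negbTE.
  have -> : ((j < 2 * I)%N && ((j : nat) != (ik k + I)%N)).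
    move: (ltn_ord j) => hj; apply/andP; split; [lia|apply/eqP; lia].
  by rewrite mulr0 addr0.
- rewrite hent_dec /= subn0 eqxx.
  have -> : ((j + 1 * I)%N == ik k) = false by apply/eqP; lia.
  have -> : ((j + 1 * I)%N < 2 * I)%N by move: (ltn_ord j); lia.
  case: (eqVneq j (ik k)) => [->|hji].
    by rewrite mul1n eqxx /= addnK hent_lt eqxx mulr1.
  have -> : ((j + 1 * I)%N != (ik k + I)%N).
    by apply/eqP; rewrite mul1n => /eqP; rewrite eqn_add2r => /eqP/val_inj; apply/eqP.
  rewrite /= (hent_dec _ _ _ _ 1) /= subn0 mulr0 addr0 /=. done.
- have -> : ((j + b.+2 * I)%N == ik k) = false by apply/eqP; lia.
  have -> : ((j + b.+2 * I)%N < 2 * I)%N = false by move: (ltn_ord j); lia.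
  have -> : ((j + b.+2 * I - I) = j + b.+1 * I)%N by rewrite !mulSn; lia.
  have -> : ((j + b.+1 * I)%N == ik k) = false by apply/eqP; lia.
  rewrite !hent_dec /= subSS.
  have -> : (k.+1 - b.+1 == k.+1)%N = false by apply/eqP; lia.
  by rewrite mulr0 addr0.
Qed.
End Step.

Section Main.
Variables (R : rcfType) (n : nat).
Local Notation one := (const_mx 1 : 'cV[R]_n).

Lemma constE (c : R) : const_mx c = c *: one.
Proof. by apply/matrixP => i j; rewrite !mxE mulr1. Qed.

Lemma one_psi (p : 'cV[R]_n) (v : 'cV[R]_n) :
  (one *m p^T) *m v = ((p^T *m v) 0 0) *: one.
Proof.
rewrite -mulmxA; apply/matrixP => i j; rewrite !mxE big_ord1 !mxE mulr1.
by rewrite mul1r (ord1 j).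
Qed.

Lemma psi_one (p : 'cV[R]_n) (c : R) : stochastic_vec p -> (p^T *m (c *: one)) 0 0 = c.
Proof.
move=> [_ hs]; rewrite -scalemxAr mxE -[RHS]mulr1; congr (_ * _).
rewrite mxE (eq_bigr (fun r => p r 0)) ?hs // => r _; rewrite !mxE mulr1 //.
Qed.

Lemma Wprod_one (Wh : nat -> 'M[R]_n) : (forall k, Wh k *m one = one) ->
  forall t s, Wprod Wh t s *m one = one.
Proof.
move=> H t; elim=> [|s IH] /=; first exact: H.
by rewrite -mulmxA IH H.
Qed.

Lemma WprodZ (Wh : nat -> 'M[R]_n) : (forall k, Wh k *m one = one) ->
  forall t s c, Wprod Wh t s *m (c *: one) = c *: one.
Proof. by move=> H t s c; rewrite -scalemxAr Wprod_one. Qed.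

Lemma Wprod_succ (Wh : nat -> 'M[R]_n) l k : (l <= k)%N ->
  Wh k.+1 *m Wprod Wh l (k - l) = Wprod Wh l (k.+1 - l).
Proof.
move=> hl; rewrite subSn //=; congr (Wh _ *m _); lia.
Qed.
End Main.

Theorem proposition2 (R : rcfType) (I D : nat) (E : rel 'I_I) (W : 'M[R]_I)
  (ik : nat -> 'I_I) (d : nat -> 'I_I -> nat) (x0 : 'I_I -> R) (delta : nat -> R)
  (C2 rho : R) (psi : nat -> 'cV[R]_(D.+2 * I))
  (hE : forall i, ~~ E i i)
  (hWst : row_stochastic W)
  (hWsupp : forall i j, i != j -> ~~ E j i -> W i j = 0)
  (hd : forall k j, (d k j <= D)%N)
  (hC2 : 0 < C2) (hrho0 : 0 < rho) (hrho1 : rho < 1)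
  (hpsi : forall t, stochastic_vec (psi t))
  (hcontr : forall k t, (t <= k)%N ->
     specnorm_le (Wprod (fun k => What D E W (ik k) (d k)) t (k - t)
                  - const_mx 1 *m (psi t)^T) (C2 * rho ^+ (k - t))) :
  let h := hvec D E W ik d x0 delta in
  let hbar := fun k : nat =>
     ((psi 0%N)^T *m h 0%N) 0 0
     + \sum_(l < k) ((psi l)^T *m ecol R (D.+2 * I)%N (ik l)) 0 0 * delta l in
  forall k : nat,
    vnorm (h k.+1 - const_mx (hbar k.+1))
    <= C2 * rho ^+ k * vnorm (h 0%N - const_mx (hbar 0%N))
       + C2 * \sum_(l < k.+1) rho ^+ (k - l) * `|delta l|.
Proof.
move=> h hbar k.
set Wh := fun k => What D E W (ik k) (d k).
set e := fun l => ecol R (D.+2 * I) (ik l).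
have hone : forall k, Wh k *m (const_mx 1 : 'cV[R]_(D.+2 * I)) = const_mx 1.
  by move=> k'; rewrite /Wh; apply: What_one.
have H1 : forall k, h k.+1 = Wprod Wh 0 k *m h 0%N +
   \sum_(l < k.+1) delta l *: (Wprod Wh l (k - l) *m e l).
  elim=> [|k' IH].
    by rewrite /h hstep // big_ord1 mulmxDr -scalemxAr.
  rewrite /h hstep // -/h IH [in RHS]big_ord_recr /= subnn mulmxDr mulmxDr mulmxA.
  rewrite mulmx_sumr -scalemxAr addrA; congr (_ + _ + _).
  apply: eq_bigr => l _; rewrite -scalemxAr mulmxA.
  change (What D E W (ik k'.+1) (d k'.+1)) with (Wh k'.+1).
  rewrite Wprod_succ //; exact: leq_ord.
have key : h k.+1 - const_mx (hbar k.+1) =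
  (Wprod Wh 0 k - const_mx 1 *m (psi 0%N)^T) *m (h 0%N - const_mx (hbar 0%N)) +
  \sum_(l < k.+1) delta l *: ((Wprod Wh l (k - l) - const_mx 1 *m (psi l)^T) *m e l).
  rewrite (constE _ _ (hbar k.+1)) (constE _ _ (hbar 0%N)) H1 /hbar big_ord0 addr0.
  set c0 := ((psi 0%N)^T *m h 0%N) 0 0.
  have foo := mulmxBl (Wprod Wh 0 k) (const_mx 1 *m (psi 0%N)^T) (h 0%N - c0 *: const_mx 1). rewrite foo. rewrite !mulmxBr !one_psi (psi_one _ _ _ _ (hpsi _)) (WprodZ _ _ _ hone) subrr subr0.
  rewrite [in RHS](eq_bigr (fun l : 'I_k.+1 => delta l *: (Wprod Wh l (k - l) *m e l) -
      (delta l * ((psi l)^T *m e l) 0 0) *: const_mx 1)); last first.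
    move=> l _; have foo2 := mulmxBl (Wprod Wh l (k - l)) (const_mx 1 *m (psi l)^T) (e l).
    by rewrite foo2 one_psi scalerBr scalerA.
  rewrite [in RHS]sumrB -[in RHS]scaler_suml [in LHS]scalerDl.
  rewrite [in LHS](eq_bigr (fun l : 'I_k.+1 => delta l * ((psi l)^T *m e l) 0 0)); last first.
    by move=> l _; rewrite mulrC.
  set A := Wprod Wh 0 k *m h 0%N.
  set S := \sum_(i < k.+1) _.
  by rewrite opprD !addrA (addrAC A S).
rewrite key.
apply: le_trans (vnormD _ _ _ _) _.
apply: lerD.
  have := hcontr k 0 (leq0n k) (h 0%N - const_mx (hbar 0%N)).
  by rewrite subn0.
apply: le_trans (vnorm_sum _ _ _ _) _.
rewrite mulr_sumr; apply: ler_sum => l _.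
rewrite vnormZ.
have hl : (ik l < D.+2 * I)%N.
  by rewrite (leq_trans (ltn_ord (ik l))) // leq_pmull.
have H := hcontr k l (leq_ord l) (e l).
rewrite /e vnorm_ecol // mulr1 in H.
rewrite mulrCA mulrA [_ * `|_|]mulrC.
apply: ler_wpM2l; first exact: normr_ge0.
by rewrite mulrC.
Qed.
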